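(* $\left\|\begin{bmatrix}1&1&0&0\\0&1&1&0\\0&0&1&1\\0&0&1&0\end{bmatrix}\right\|_\bullet>\left\|\begin{bmatrix}1&1&0&0\\0&1&1&0\\0&0&1&1\\0&0&0&1\end{bmatrix}\right\|_\bullet$.
   Context: Fix $\mathbb F\in\{\mathbb R,\mathbb C\}$. For an $m\times n$ matrix $A$, the Schur norm is $\|A\|_\bullet=\sup\{\|A\bullet X\|: X\in M_{m,n}(\mathbb F),\ \|X\|\le1\}$, where $A\bullet X=[a_{ij}x_{ij}]$ is the entrywise product and $\|\cdot\|$ is the operator norm $\ell^2_n\to\ell^2_m$. *)

(* Defs.v *)
From HB Require Import structures.
From mathcomp Require Import all_boot all_order all_algebra.
From mathcomp Require Import boolp classical_sets reals.
From mathcomp Require complex.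
Import complex.ComplexField.
Set Implicit Arguments. Unset Strict Implicit. Unset Printing Implicit Defensive.
Import Order.TTheory GRing.Theory Num.Theory.
Local Open Scope ring_scope.
Local Open Scope classical_set_scope.

(* Euclidean (ell^2) norm of a column vector, given the modulus |.| : F -> R
   of the scalar field F (F = R with the absolute value, or F = R[i]
   with the complex modulus). *)
Definition vnorm (R : realType) (F : Type) (abs : F -> R) (n : nat)
  (x : 'cV[F]_n) : R := Num.sqrt (\sum_(i < n) abs (x i ord0) ^+ 2).

Definition opnorm (R : realType) (F : pzRingType) (abs : F -> R) (m n : nat)
  (A : 'M[F]_(m, n)) : R :=
  sup [set vnorm abs (A *m x) | x in [set x : 'cV[F]_n | vnorm abs x <= 1]].

Definition schur_prod (F : pzRingType) (m n : nat) (A X : 'M[F]_(m, n)) :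
  'M[F]_(m, n) := \matrix_(i, j) (A i j * X i j).

Definition schur_norm (R : realType) (F : pzRingType) (abs : F -> R) (m n : nat)
  (A : 'M[F]_(m, n)) : R :=
  sup [set opnorm abs (schur_prod A X) |
         X in [set X : 'M[F]_(m, n) | opnorm abs X <= 1]].

Definition absR (R : realType) (x : R) : R := `|x|.
Definition absC (R : realType) (z : complex.complex R) : R :=
  Num.sqrt (complex.Re z ^+ 2 + complex.Im z ^+ 2).

Definition mx01 {F : pzRingType} (n : nat) (t : nat -> nat -> bool) : 'M[F]_n :=
  \matrix_(i, j) (t i j)%:R.

(* [[1,1,0,0],[0,1,1,0],[0,0,1,1],[0,0,1,0]] *)
Definition tA (i j : nat) : bool :=
  [|| (i == 0) && ((j == 0) || (j == 1)),
      (i == 1) && ((j == 1) || (j == 2)),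
      (i == 2) && ((j == 2) || (j == 3)) |
      (i == 3) && (j == 2)].
(* [[1,1,0,0],[0,1,1,0],[0,0,1,1],[0,0,0,1]] *)
Definition tB (i j : nat) : bool :=
  [|| (i == 0) && ((j == 0) || (j == 1)),
      (i == 1) && ((j == 1) || (j == 2)),
      (i == 2) && ((j == 2) || (j == 3)) |
      (i == 3) && (j == 3)].

(* Main.v *)
Require Import Defs.
From HB Require Import structures.
From mathcomp Require Import all_boot all_order all_algebra.
From mathcomp Require Import boolp classical_sets reals.
From mathcomp Require complex.
Import complex.ComplexField.
Import Order.TTheory GRing.Theory Num.Theory.
From mathcomp Require Import ring lra.
Local Open Scope ring_scope.
Local Open Scope classical_set_scope.
Set Implicit Arguments. Unset Strict Implicit.

Record Scal (R : realType) (F : comPzRingType) := {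
  emb : {rmorphism R -> F};
  re : F -> R; im : F -> R; ab : F -> R;
  reD : forall x y, re (x + y) = re x + re y;
  imD : forall x y, im (x + y) = im x + im y;
  reM : forall r z, re (emb r * z) = r * re z;
  imM : forall r z, im (emb r * z) = r * im z;
  re1 : re 1 = 1; im1 : im 1 = 0;
  ab2 : forall z, ab z ^+ 2 = re z ^+ 2 + im z ^+ 2;
  ab_ge0 : forall z, 0 <= ab z;
  abD : forall x y, ab (x + y) <= ab x + ab y;
  abM : forall x y, ab (x * y) = ab x * ab y }.

Section G.
Variables (R : realType) (F : comPzRingType) (S : Scal R F).
Local Notation emb := (emb S).
Local Notation re := (re S).
Local Notation im := (im S).
Local Notation ab := (ab S).

Definition N2 (x : 'cV[F]_4) : R := \sum_(i < 4) ab (x i ord0) ^+ 2.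

Lemma re0 : re 0 = 0.
Proof. have H := reD S 0 0; rewrite addr0 in H; lra. Qed.
Lemma im0 : im 0 = 0.
Proof. have H := imD S 0 0; rewrite addr0 in H; lra. Qed.

Lemma re_sum (I : finType) (f : I -> F) : re (\sum_i f i) = \sum_i re (f i).
Proof. by elim/big_rec2: _ => [|i a b _ <-]; rewrite ?re0 ?reD. Qed.
Lemma im_sum (I : finType) (f : I -> F) : im (\sum_i f i) = \sum_i im (f i).
Proof. by elim/big_rec2: _ => [|i a b _ <-]; rewrite ?im0 ?imD. Qed.

Lemma re_emb r : re (emb r) = r.
Proof. by rewrite -[emb r]mulr1 reM re1 mulr1. Qed.
Lemma im_emb r : im (emb r) = 0.
Proof. by rewrite -[emb r]mulr1 imM im1 mulr0. Qed.

Lemma ab0 : ab 0 = 0.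
Proof.
have := ab2 S 0; rewrite re0 im0 expr0n /= addr0 => /eqP.
by rewrite sqrf_eq0 => /eqP.
Qed.

Lemma ab2_embM r z : ab (emb r * z) ^+ 2 = r ^+ 2 * ab z ^+ 2.
Proof. rewrite !ab2 reM imM; ring. Qed.

Lemma ab2_emb r : ab (emb r) ^+ 2 = r ^+ 2.
Proof. by rewrite ab2 re_emb im_emb expr0n addr0. Qed.

Lemma N2_ge0 x : 0 <= N2 x.
Proof. by apply: sumr_ge0 => i _; rewrite sqr_ge0. Qed.

Lemma vnormE x : vnorm ab x = Num.sqrt (N2 x).
Proof. by []. Qed.

Lemma sqrt_le1 (s : R) : 0 <= s -> (Num.sqrt s <= 1) = (s <= 1).
Proof. by move=> s0; rewrite -[X in _ <= X]sqrtr1 ler_sqrt // ler01. Qed.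

Lemma ab_le_N2 (x : 'cV[F]_4) (i : 'I_4) : ab (x i ord0) ^+ 2 <= N2 x.
Proof.
rewrite /N2 (bigD1 i) //= lerDl; apply: sumr_ge0 => j _; exact: sqr_ge0.
Qed.

Lemma ab_sum (I : finType) (f : I -> F) : ab (\sum_i f i) <= \sum_i ab (f i).
Proof.
elim/big_rec2: _ => [|i a b _ H]; first by rewrite ab0.
by apply: le_trans (abD S _ _) _; rewrite lerD2l.
Qed.

Lemma sq_le (a b : R) : 0 <= a -> a <= b -> a ^+ 2 <= b ^+ 2.
Proof. move=> ? ?; nra. Qed.

Definition opset (M : 'M[F]_4) :=
  [set vnorm ab (M *m x) | x in [set x : 'cV[F]_4 | vnorm ab x <= 1]].

Lemma opset_ub M : has_ubound (opset M).
Proof.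
exists (Num.sqrt (\sum_(i < 4) (\sum_(j < 4) ab (M i j)) ^+ 2)).
rewrite /opset => _ [x /= Hx <-]; rewrite vnormE ler_wsqrtr //.
rewrite vnormE sqrt_le1 ?N2_ge0 // in Hx.
rewrite /N2; apply: ler_sum => i _.
apply: sq_le; first exact: ab_ge0.
rewrite mxE; apply: le_trans (ab_sum _) _; apply: ler_sum => j _.
rewrite abM ler_piMr ?ab_ge0 //.
have := le_trans (ab_le_N2 x j) Hx.
have := ab_ge0 S (x j ord0); move: (ab _) => t ? ?; nra.
Qed.

Lemma opset0 M : opset M !=set0.
Proof.
exists (vnorm ab (M *m 0)); exists 0 => //=.
rewrite vnormE /N2 big1 ?sqrtr0 ?ler01 // => i _; by rewrite mxE ab0 expr0n.
Qed.

Lemma op_ge M x : N2 x <= 1 -> Num.sqrt (N2 (M *m x)) <= opnorm ab M.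
Proof.
move=> Hx; apply: (ub_le_sup (opset_ub M)); exists x => //=.
by rewrite vnormE sqrt_le1 ?N2_ge0.
Qed.

Lemma op_le M c : 0 <= c -> (forall x, N2 x <= 1 -> N2 (M *m x) <= c) ->
  opnorm ab M <= Num.sqrt c.
Proof.
move=> c0 H; apply: ge_sup; first exact: opset0.
move=> _ [x /= Hx <-]; rewrite vnormE ler_sqrt //; apply: H.
by rewrite vnormE sqrt_le1 ?N2_ge0 in Hx.
Qed.

Lemma op_contr X : opnorm ab X <= 1 -> forall y, N2 y <= 1 -> N2 (X *m y) <= 1.
Proof.
move=> HX y Hy; have := le_trans (op_ge X Hy) HX.
by rewrite sqrt_le1 ?N2_ge0.
Qed.


Lemma homog (X : 'M[F]_4) : (forall y, N2 y <= 1 -> N2 (X *m y) <= 1) ->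
  forall y, N2 (X *m y) <= N2 y.
Proof.
move=> H y; rewrite leNgt; apply/negP => Hlt.
have s0 := N2_ge0 y.
have u0 : 0 < (N2 y + N2 (X *m y)) / 2 by lra.
pose c := (Num.sqrt ((N2 y + N2 (X *m y)) / 2))^-1.
have c2 : c ^+ 2 = ((N2 y + N2 (X *m y)) / 2)^-1 by rewrite /c exprVn sqr_sqrtr // ltW.
have Hs : N2 (emb c *: y) = c ^+ 2 * N2 y.
  by rewrite /N2 mulr_sumr; apply: eq_bigr => i _; rewrite mxE ab2_embM.
have Ht : N2 (X *m (emb c *: y)) = c ^+ 2 * N2 (X *m y).
  by rewrite -scalemxAr /N2 mulr_sumr; apply: eq_bigr => i _; rewrite mxE ab2_embM.
have := H (emb c *: y); rewrite Hs Ht c2.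
move: u0; move Eu: (_ / 2) => u u0.
rewrite !(mulrC u^-1) !ler_pdivrMr // !mul1r.
move=> H'; have : N2 (X *m y) <= u by apply: H'; lra.
lra.
Qed.

Lemma CS4v (u0 u1 u2 u3 r0 r1 r2 r3 : R) :
  (0 + u0 * r0 + u1 * r1 + u2 * r2 + u3 * r3) ^+ 2 <=
  (0 + u0 ^+ 2 + u1 ^+ 2 + u2 ^+ 2 + u3 ^+ 2) * (0 + r0 ^+ 2 + r1 ^+ 2 + r2 ^+ 2 + r3 ^+ 2).
Proof.
rewrite -subr_ge0.
have -> : (0 + u0 ^+ 2 + u1 ^+ 2 + u2 ^+ 2 + u3 ^+ 2) * (0 + r0 ^+ 2 + r1 ^+ 2 + r2 ^+ 2 + r3 ^+ 2)
  - (0 + u0 * r0 + u1 * r1 + u2 * r2 + u3 * r3) ^+ 2 =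
  (u0 * r1 - u1 * r0) ^+ 2 + (u0 * r2 - u2 * r0) ^+ 2 + (u0 * r3 - u3 * r0) ^+ 2
  + (u1 * r2 - u2 * r1) ^+ 2 + (u1 * r3 - u3 * r1) ^+ 2 + (u2 * r3 - u3 * r2) ^+ 2.
  by ring.
by rewrite !addr_ge0 ?sqr_ge0.
Qed.

Lemma CS4 (u r : 'I_4 -> R) :
  (\sum_k u k * r k) ^+ 2 <= (\sum_k u k ^+ 2) * (\sum_k r k ^+ 2).
Proof. rewrite !big_ord_recr !big_ord0 /=; exact: CS4v. Qed.

Lemma CSab (u : 'I_4 -> R) (w : 'I_4 -> F) :
  ab (\sum_k emb (u k) * w k) ^+ 2 <= (\sum_k u k ^+ 2) * (\sum_k ab (w k) ^+ 2).
Proof.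
rewrite ab2 re_sum im_sum.
under eq_bigr do rewrite reM.
under [X in _ + X ^+ 2 <= _]eq_bigr do rewrite imM.
under [X in _ <= _ * X]eq_bigr do rewrite ab2.
rewrite big_split /= mulrDr.
by apply: lerD; apply: CS4.
Qed.

Lemma factor (M X : 'M[F]_4) (U V : 'M[R]_4) (a b : R) :
  (forall i j, M i j = emb (\sum_k U i k * V j k)) ->
  (forall i, \sum_k U i k ^+ 2 <= a) -> (forall j, \sum_k V j k ^+ 2 <= b) ->
  (forall y, N2 y <= 1 -> N2 (X *m y) <= 1) ->
  forall x, N2 x <= 1 -> N2 (schur_prod M X *m x) <= a * b.
Proof.
move=> HM Ha Hb HX x Hx.
have a0 : 0 <= a.
  by apply: le_trans (Ha ord0); apply: sumr_ge0 => k _; exact: sqr_ge0.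
have b0 : 0 <= b.
  by apply: le_trans (Hb ord0); apply: sumr_ge0 => k _; exact: sqr_ge0.
pose yk k : 'cV[F]_4 := \col_j (emb (V j k) * x j ord0).
have Hrow : forall i, (schur_prod M X *m x) i ord0 =
    \sum_k emb (U i k) * (X *m yk k) i ord0.
  move=> i; rewrite mxE.
  under eq_bigr do rewrite mxE HM rmorph_sum !mulr_suml.
  rewrite exchange_big /=; apply: eq_bigr => k _; rewrite mxE mulr_sumr.
  by apply: eq_bigr => j _; rewrite !mxE rmorphM; ring.
have H1 : N2 (schur_prod M X *m x) <=
    \sum_i a * \sum_k ab ((X *m yk k) i ord0) ^+ 2.
  rewrite /N2; apply: ler_sum => i _; rewrite Hrow.
  apply: le_trans (CSab _ _) _; apply: ler_wpM2r; last exact: Ha.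
  by apply: sumr_ge0 => k _; exact: sqr_ge0.
apply: le_trans H1 _.
rewrite -mulr_sumr exchange_big /=.
have H2 : \sum_k \sum_i ab ((X *m yk k) i ord0) ^+ 2 <= \sum_k N2 (yk k).
  by apply: ler_sum => k _; apply: homog.
have H3 : \sum_k N2 (yk k) <= b * N2 x.
  rewrite /N2 exchange_big /= mulr_sumr; apply: ler_sum => j _.
  under eq_bigr do rewrite mxE ab2_embM.
  by rewrite -mulr_suml; apply: ler_wpM2r; [exact: sqr_ge0 | exact: Hb].
apply: le_trans (ler_wpM2l a0 (le_trans H2 H3)) _.
by rewrite mulrA ler_piMr // mulr_ge0.
Qed.

Lemma N2_0 : N2 0 = 0.
Proof. by rewrite /N2 big1 // => i _; rewrite mxE ab0 expr0n. Qed.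

Lemma op0 : opnorm ab (0 : 'M[F]_4) <= 1.
Proof.
apply: le_trans (op_le (c := 0) _ _) _ => //.
  by move=> x _; rewrite mul0mx N2_0.
by rewrite sqrtr0 ler01.
Qed.

Lemma schur_le (M : 'M[F]_4) (U V : 'M[R]_4) (a b : R) :
  (forall i j, M i j = emb (\sum_k U i k * V j k)) ->
  (forall i, \sum_k U i k ^+ 2 <= a) -> (forall j, \sum_k V j k ^+ 2 <= b) ->
  schur_norm ab M <= Num.sqrt (a * b).
Proof.
move=> HM Ha Hb.
have a0 : 0 <= a.
  by apply: le_trans (Ha ord0); apply: sumr_ge0 => k _; exact: sqr_ge0.
have b0 : 0 <= b.
  by apply: le_trans (Hb ord0); apply: sumr_ge0 => k _; exact: sqr_ge0.
apply: ge_sup.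
  by exists (opnorm ab (schur_prod M 0)); exists 0 => //=; exact: op0.
move=> _ [X /= HX <-]; apply: op_le; first exact: mulr_ge0.
by apply: factor HM Ha Hb _; apply: op_contr.
Qed.

Lemma schur_ge (M X : 'M[F]_4) (U V : 'M[R]_4) (a b : R) (x : 'cV[F]_4) :
  (forall i j, M i j = emb (\sum_k U i k * V j k)) ->
  (forall i, \sum_k U i k ^+ 2 <= a) -> (forall j, \sum_k V j k ^+ 2 <= b) ->
  opnorm ab X <= 1 -> N2 x <= 1 ->
  Num.sqrt (N2 (schur_prod M X *m x)) <= schur_norm ab M.
Proof.
move=> HM Ha Hb HX Hx.
have a0 : 0 <= a.
  by apply: le_trans (Ha ord0); apply: sumr_ge0 => k _; exact: sqr_ge0.
have b0 : 0 <= b.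
  by apply: le_trans (Hb ord0); apply: sumr_ge0 => k _; exact: sqr_ge0.
apply: le_trans (op_ge _ Hx) _.
apply: ub_le_sup; last by exists X.
exists (Num.sqrt (a * b)) => _ [Y /= HY <-]; apply: op_le; first exact: mulr_ge0.
by apply: factor HM Ha Hb _; apply: op_contr.
Qed.

Lemma emb_contr (q : 'M[R]_4) :
  (forall y : 'I_4 -> R, \sum_i (\sum_j q i j * y j) ^+ 2 <= \sum_j y j ^+ 2) ->
  opnorm ab (map_mx emb q) <= 1.
Proof.
move=> Hq; rewrite -sqrtr1; apply: op_le; first exact: ler01.
move=> y Hy; apply: le_trans Hy.
rewrite /N2.
under eq_bigr do rewrite ab2 mxE re_sum im_sum.
under eq_bigr do under eq_bigr do rewrite mxE reM.
under eq_bigr do under [X in _ + X ^+ 2]eq_bigr do rewrite mxE imM.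
under [X in _ <= X]eq_bigr do rewrite ab2.
rewrite !big_split /=; apply: lerD; exact: Hq.
Qed.

Lemma N2_emb (v : 'cV[R]_4) : N2 (map_mx emb v) = \sum_i v i ord0 ^+ 2.
Proof. by apply: eq_bigr => i _; rewrite mxE ab2_emb. Qed.

Lemma schur_emb (m q : 'M[R]_4) (v : 'cV[R]_4) :
  schur_prod (map_mx emb m) (map_mx emb q) *m map_mx emb v =
  map_mx emb (schur_prod m q *m v).
Proof.
rewrite map_mxM; congr (_ *m _); apply/matrixP => i j.
by rewrite !mxE rmorphM.
Qed.

Lemma mx01_emb t : (mx01 4 t : 'M[F]_4) = map_mx emb (mx01 4 t).
Proof. by apply/matrixP => i j; rewrite !mxE rmorph_nat. Qed.

End G.

Section C.
Variable R : realType.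
Definition Uf (i j : nat) : R :=
  match i, j with
  | 0, 0 => (111 / 100)
  | 1, 0 => (17 / 40)
  | 1, 1 => (41 / 40)
  | 2, 0 => (-13 / 100)
  | 2, 1 => (103 / 200)
  | 2, 2 => (-39 / 40)
  | 3, 0 => (13 / 100)
  | 3, 1 => (-39 / 200)
  | 3, 2 => (-121 / 200)
  | 3, 3 => (9 / 10)
  | _, _ => 0 end.
Definition Vf (i j : nat) : R :=
  match i, j with
  | 0, 0 => (100 / 111)
  | 0, 1 => (-(1 * 1000 + 700) / (4 * 1000 + 551))
  | 0, 2 => (-(6 * 1000 + 260) / (19 * 1000 + 721))
  | 0, 3 => (-(226 * 1000 + 4) / (532 * 1000 + 467))
  | 1, 0 => (100 / 111)
  | 1, 1 => ((2 * 1000 + 740) / (4 * 1000 + 551))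
  | 1, 2 => ((11 * 1000 + 708) / (59 * 1000 + 163))
  | 1, 3 => ((355 * 1000 + 12) / ((2 * 1000 + 662) * 1000 + 335))
  | 2, 1 => (40 / 41)
  | 2, 2 => (-272 / 533)
  | 2, 3 => (-(3 * 1000 + 158) / (23 * 1000 + 985))
  | 3, 2 => (-40 / 39)
  | 3, 3 => (148 / 351)
  | _, _ => 0 end.
Definition Qf (i j : nat) : R :=
  match i, j with
  | 0, 0 => (7 * 1000 + 879)
  | 0, 1 => (5 * 1000 + 200)
  | 0, 2 => -(1 * 1000 + 960)
  | 0, 3 => (1 * 1000 + 240)
  | 1, 0 => -(2 * 1000 + 960)
  | 1, 1 => (7 * 1000 + 79)
  | 1, 2 => (5 * 1000 + 632)
  | 1, 3 => -(1 * 1000 + 976)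
  | 2, 0 => (1 * 1000 + 0)
  | 2, 1 => -(1 * 1000 + 472)
  | 2, 2 => (5 * 1000 + 191)
  | 2, 3 => (8 * 1000 + 24)
  | 3, 0 => (4 * 1000 + 760)
  | 3, 1 => -(3 * 1000 + 896)
  | 3, 2 => (5 * 1000 + 656)
  | 3, 3 => -(4 * 1000 + 967)
  | _, _ => 0 end / (9 * 1000 + 721).
Definition xf (j : nat) : R :=
  match j with 0 => 300 | 1 => 600 | 2 => 700 | 3 => 400 | _ => 0 end / (1 * 1000 + 49).

Definition Ub : 'M[R]_4 := \matrix_(i, j) Uf i j.
Definition Vb : 'M[R]_4 := \matrix_(i, j) Vf i j.
Definition Qm : 'M[R]_4 := \matrix_(i, j) Qf i j.
Definition xv : 'cV[R]_4 := \col_j xf j.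

Lemma F1 i j : (mx01 4 tB : 'M[R]_4) i j = \sum_k Ub i k * Vb j k.
Proof.
rewrite !mxE !big_ord_recr !big_ord0 /= !mxE /=.
case: i => [[|[|[|[|i]]]] Hi] //=; case: j => [[|[|[|[|j]]]] Hj] //=;
 rewrite /Uf /Vf /=; by field.
Qed.

Lemma F2a i : \sum_k Ub i k ^+ 2 <= 4931 / (4 * 1000).
Proof.
rewrite !big_ord_recr !big_ord0 /= !mxE /=.
case: i => [[|[|[|[|i]]]] Hi] //=; rewrite /Uf /=; [(rewrite -subr_ge0 (_ : _ - _ = (13 / (20 * 1000 + 0))); [apply: divr_ge0; lra | by field]) | (rewrite -subr_ge0 (_ : _ - _ = (3 / (2 * 1000 + 0))); [apply: divr_ge0; lra | by field]) | (rewrite -subr_ge0 (_ : _ - _ = (0 / 1)); [apply: divr_ge0; lra | by field]) | (rewrite -subr_ge0 (_ : _ - _ = (9 / (5 * 1000 + 0))); [apply: divr_ge0; lra | by field])].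
Qed.

Lemma F2b j : \sum_k Vb j k ^+ 2 <= (1 * 1000 + 233) / (1 * 1000).
Proof.
rewrite !big_ord_recr !big_ord0 /= !mxE /=.
case: j => [[|[|[|[|j]]]] Hj] //=; rewrite /Vf /=; [(rewrite -subr_ge0 (_ : _ - _ = ((((262 * 1000 + 655) * 1000 + 391) * 1000 + 737) / ((((283 * 1000 + 521) * 1000 + 106) * 1000 + 89) * 1000 + 0))); [apply: divr_ge0; lra | by field]) | (rewrite -subr_ge0 (_ : _ - _ = ((((553 * 1000 + 298) * 1000 + 217) * 1000 + 977) / ((((283 * 1000 + 521) * 1000 + 106) * 1000 + 89) * 1000 + 0))); [apply: divr_ge0; lra | by field]) | (rewrite -subr_ge0 (_ : _ - _ = (((78 * 1000 + 798) * 1000 + 137) / (((23 * 1000 + 11) * 1000 + 209) * 1000 + 0))); [apply: divr_ge0; lra | by field]) | (rewrite -subr_ge0 (_ : _ - _ = ((402 * 1000 + 833) / ((123 * 1000 + 201) * 1000 + 0))); [apply: divr_ge0; lra | by field])].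
Qed.

Lemma F3 (y : 'I_4 -> R) : \sum_i (\sum_j Qm i j * y j) ^+ 2 <= \sum_j y j ^+ 2.
Proof.
rewrite !big_ord_recr !big_ord0 /= !mxE /= /Qf /=.
rewrite le_eqVlt; apply/orP; left; apply/eqP; by field.
Qed.

Lemma F4x : \sum_i xv i ord0 ^+ 2 <= 1.
Proof. rewrite !big_ord_recr !big_ord0 /= !mxE /= /xf /=. (rewrite -subr_ge0 (_ : _ - _ = (401 / ((1 * 1000 + 100) * 1000 + 401))); [apply: divr_ge0; lra | by field]). Qed.

Lemma F4 : (1 * 1000 + 535) / (1 * 1000) <=
  \sum_i ((schur_prod (mx01 4 tA) Qm *m xv) i ord0) ^+ 2.
Proof.
rewrite !big_ord_recr !big_ord0 /=.
rewrite !mxE !big_ord_recr !big_ord0 /= !mxE /= /Qf /xf /=.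
(rewrite -subr_ge0 (_ : _ - _ = (((((6 * 1000 + 407) * 1000 + 600) * 1000 + 588) * 1000 + 13) / (((((20 * 1000 + 797) * 1000 + 103) * 1000 + 746) * 1000 + 848) * 1000 + 200))); [apply: divr_ge0; lra | by field]).
Qed.
End C.

Definition SR (R : realType) : Scal R R.
Proof.
refine (@Build_Scal R R (idfun : {rmorphism R -> R}) idfun (fun _ => 0) (@absR R)
  _ _ _ _ _ _ _ _ _ _).
- by [].
- by move=> *; rewrite addr0.
- by [].
- by move=> *; rewrite mulr0.
- by [].
- by [].
- by move=> z; rewrite /absR real_normK ?num_real // expr0n addr0.
- by move=> z; rewrite /absR normr_ge0.
- by move=> x y; rewrite /absR ler_normD.
- by move=> x y; rewrite /absR normrM.
Defined.

Lemma absCE (R : realType) (z : complex.complex R) : absC z = complex.ComplexField.Normc.normc z.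
Proof. by case: z. Qed.

Definition SC (R : realType) : Scal R (complex.complex R).
Proof.
refine (@Build_Scal R (complex.complex R) (complex.real_complex R : {rmorphism R -> _})
  (@complex.Re R) (@complex.Im R) (@absC R) _ _ _ _ _ _ _ _ _ _).
- by case=> a b [c d].
- by case=> a b [c d].
- by move=> r [a b] /=; ring.
- by move=> r [a b] /=; ring.
- by [].
- by [].
- by move=> z; rewrite /absC sqr_sqrtr // addr_ge0 ?sqr_ge0.
- by move=> z; rewrite /absC sqrtr_ge0.
- move=> x y; rewrite !absCE.
  by have := complex.ComplexField.lec_normD x y; rewrite /= => /andP[].
- by move=> x y; rewrite !absCE complex.ComplexField.Normc.normcM.
Defined.

Lemma main (R : realType) (F : comPzRingType) (S : Scal R F) :
  schur_norm (ab S) (mx01 4 tB : 'M[F]_4) < schur_norm (ab S) (mx01 4 tA : 'M[F]_4).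
Proof.
have HB : schur_norm (ab S) (mx01 4 tB : 'M[F]_4) <=
    Num.sqrt (4931 / (4 * 1000) * ((1 * 1000 + 233) / (1 * 1000))).
  apply: (schur_le (U := Ub R) (V := Vb R)); last exact: F2b; last exact: F2a.
  by move=> i j; rewrite (mx01_emb S) mxE F1.
have HA : Num.sqrt (N2 S (schur_prod (mx01 4 tA) (map_mx (emb S) (Qm R)) *m
     map_mx (emb S) (xv R))) <= schur_norm (ab S) (mx01 4 tA : 'M[F]_4).
  apply: (schur_ge (U := mx01 4 tA) (V := 1%:M) (a := 2) (b := 1)).
  - move=> i j; rewrite (mx01_emb S) mxE; congr (emb S _).
    rewrite (bigD1 j) //= [1%:M j j]mxE eqxx mulr1 big1 ?addr0 // => k Hk.
    by rewrite [1%:M j k]mxE eq_sym (negbTE Hk) mulr0.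
  - move=> i; rewrite !big_ord_recr !big_ord0 /= !mxE /=.
    by case: i => [[|[|[|[|i]]]] Hi] //=; lra.
  - move=> j; rewrite !big_ord_recr !big_ord0 /= !mxE /=.
    by case: j => [[|[|[|[|j]]]] Hj] //=; lra.
  - exact/emb_contr/F3.
  - by rewrite N2_emb; exact: F4x.
rewrite (mx01_emb S) schur_emb N2_emb in HA.
rewrite -(mx01_emb S) in HA.
apply: le_lt_trans HB _; apply: (lt_le_trans _ HA).
rewrite ltr_sqrt; last by apply: lt_le_trans (F4 R); lra.
by apply: lt_le_trans (F4 R); lra.
Qed.

Theorem proposition5p5 (R : realType) :
  schur_norm (@absR R) (mx01 4 tB : 'M[R]_4) <
    schur_norm (@absR R) (mx01 4 tA : 'M[R]_4)
  /\
  schur_norm (@absC R) (mx01 4 tB : 'M[complex.complex R]_4) <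
    schur_norm (@absC R) (mx01 4 tA : 'M[complex.complex R]_4).
Proof.
split; [exact: (main (SR R)) | exact: (main (SC R))].
Qed.
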